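(* Let $k_1<k_2$ and let $p_1,\ldots,p_\ell$ be the primes in $S(k_1,k_2):=\{p\in\mathcal{P}:k_1<p\le k_2\}$. Let $n,m\in\mathbb{N}$ satisfy $m\prod_{j=1}^{\ell}p_j\le n<(m+1)\prod_{j=1}^{\ell}p_j$. Let $X_1,\ldots,X_n$ be i.i.d. uniform on $\{1,\ldots,n\}$, and let $\tilde X_1,\ldots,\tilde X_n$ be i.i.d. with $\tilde X_i=p_1^{c_1}\cdots p_\ell^{c_\ell}$ where $c_1,\ldots,c_\ell$ are independent Bernoulli variables with parameters $1/p_1,\ldots,1/p_\ell$. For a prime $q$ let $Y_q:=\#\{i:q\mid X_i\}$ and $\tilde Y_q:=\#\{i:q\mid\tilde X_i\}$. Then there exists a coupling $\mu$ of $(X_i)_{i\le n}$ and $(\tilde X_i)_{i\le n}$ (a probability measure with these two marginal laws) such that for every $\epsilon>0$, \[ \mu\left(\sum_{q\in S(k_{1},k_{2})}Y_{q}^{2}-\sum_{q\in S(k_{1},k_{2})}\tilde{Y}_{q}^{2}\geq n^{2}\epsilon\right)\leq2^{n}\left(\frac{1}{m}\right)^{\frac{n\epsilon}{2k_{2}}}. \]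
   Context: $\mathcal{P}$ denotes the set of primes. *)

(* Defs.v *)
From Stdlib Require Import Reals.
From mathcomp Require Import all_boot.
Unset Printing Implicit Defensive.

Definition Sprimes (k1 k2 : nat) : seq nat :=
  [seq p <- iota k1.+1 (k2 - k1) | prime p].

Definition primeprod (k1 k2 : nat) : nat := \prod_(p <- Sprimes k1 k2) p.

(* Joint sample space: (X_1..X_n) with X_i = x i + 1 in {1..n}, and
   (Xt_1..Xt_n) where Xt_i is encoded by the set of primes dividing it
   (the set of j with c_j = 1), Xt_i = prod_{p in y i} p. *)
Definition Omega (n k2 : nat) : finType :=
  ({ffun 'I_n -> 'I_n} * {ffun 'I_n -> {set 'I_k2.+1}})%type.

Definition Xval (n : nat) (x : {ffun 'I_n -> 'I_n}) (i : 'I_n) : nat := (x i).+1.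

Definition Xtval (k2 : nat) (A : {set 'I_k2.+1}) : nat := \prod_(p in A) (p : nat).

Definition Ycount (n : nat) (v : 'I_n -> nat) (q : nat) : nat :=
  #|[set i : 'I_n | q %| v i]|.

Definition sumsqY (k1 k2 n : nat) (v : 'I_n -> nat) : nat :=
  \sum_(q <- Sprimes k1 k2) (Ycount n v q) ^ 2.

Local Open Scope R_scope.

(* Law of a single Xt_i: c_p ~ Bernoulli(1/p) independent for p in S;
   probability that the set of p with c_p = 1 equals A. *)
Definition tlaw (k1 k2 : nat) (A : {set 'I_k2.+1}) : R :=
  if [forall p : 'I_k2.+1, (p \in A) ==> ((p : nat) \in Sprimes k1 k2)] then
    \big[Rmult/R1]_(p : 'I_k2.+1 | (p : nat) \in Sprimes k1 k2)
       (if p \in A then / INR p else 1 - / INR p)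
  else 0.

Definition is_coupling (k1 k2 n : nat) (mu : Omega n k2 -> R) : Prop :=
  (forall w, 0 <= mu w) /\
  \big[Rplus/R0]_(w : Omega n k2) mu w = 1 /\
  (forall x : {ffun 'I_n -> 'I_n},
      \big[Rplus/R0]_(y : {ffun 'I_n -> {set 'I_k2.+1}}) mu (x, y) = (/ INR n) ^ n) /\
  (forall y : {ffun 'I_n -> {set 'I_k2.+1}},
      \big[Rplus/R0]_(x : {ffun 'I_n -> 'I_n}) mu (x, y)
        = \big[Rmult/R1]_(i : 'I_n) tlaw k1 k2 (y i)).

Definition event_prob (k1 k2 n : nat) (mu : Omega n k2 -> R) (eps : R) : R :=
  \big[Rplus/R0]_(w : Omega n k2)
    (if Rle_dec (INR n ^ 2 * eps)
          (INR (sumsqY k1 k2 n (Xval n w.1)) - INR (sumsqY k1 k2 n (fun i => Xtval k2 (w.2 i))))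
     then mu w else 0).

(* Main.v *)
Require Import Defs.
From HB Require Import structures.
From Stdlib Require Import Reals Lra Lia.
From mathcomp Require Import all_boot zify.
Local Open Scope R_scope.

Lemma RplusA : associative Rplus. Proof. by move=> *; rewrite Rplus_assoc. Qed.
Lemma RmultA : associative Rmult. Proof. by move=> *; rewrite Rmult_assoc. Qed.
HB.instance Definition _ := Monoid.isComLaw.Build R R0 Rplus RplusA Rplus_comm Rplus_0_l.
HB.instance Definition _ := Monoid.isComLaw.Build R R1 Rmult RmultA Rmult_comm Rmult_1_l.
HB.instance Definition _ := Monoid.isMulLaw.Build R R0 Rmult Rmult_0_l Rmult_0_r.
HB.instance Definition _ := Monoid.isAddLaw.Build R Rmult Rplus Rmult_plus_distr_r Rmult_plus_distr_l.


Notation "\rsum_ ( i : I ) F" := (\big[Rplus/R0]_(i : I) F)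
  (at level 41, F at level 41, i, I at level 50).

Lemma INR_sum (I : Type) (r : seq I) (P : pred I) (F : I -> nat) :
  INR (\sum_(i <- r | P i) F i)%N = \big[Rplus/R0]_(i <- r | P i) INR (F i).
Proof. apply: (big_morph INR) => //; exact: plus_INR. Qed.

Lemma INR_prod (I : Type) (r : seq I) (P : pred I) (F : I -> nat) :
  INR (\prod_(i <- r | P i) F i)%N = \big[Rmult/R1]_(i <- r | P i) INR (F i).
Proof. apply: (big_morph INR) => //; exact: mult_INR. Qed.

Lemma Rsum_ge0 (I : Type) (r : seq I) (P : pred I) (F : I -> R) :
  (forall i, P i -> 0 <= F i) -> 0 <= \big[Rplus/R0]_(i <- r | P i) F i.
Proof. move=> H; apply: (big_ind (fun x => 0 <= x)) => //; [lra| move=> *; lra]. Qed.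

Lemma Rprod_ge0 (I : Type) (r : seq I) (P : pred I) (F : I -> R) :
  (forall i, P i -> 0 <= F i) -> 0 <= \big[Rmult/R1]_(i <- r | P i) F i.
Proof. move=> H; apply: (big_ind (fun x => 0 <= x)) => //; [lra| move=> *; nra]. Qed.

Lemma Rsum_le (I : Type) (r : seq I) (P : pred I) (F G : I -> R) :
  (forall i, P i -> F i <= G i) ->
  \big[Rplus/R0]_(i <- r | P i) F i <= \big[Rplus/R0]_(i <- r | P i) G i.
Proof. move=> H; apply: (big_ind2 (fun x y => x <= y)) => //; [lra| move=> *; lra]. Qed.

Lemma Rprod_le (I : Type) (r : seq I) (P : pred I) (F G : I -> R) :
  (forall i, P i -> 0 <= F i <= G i) ->
  \big[Rmult/R1]_(i <- r | P i) F i <= \big[Rmult/R1]_(i <- r | P i) G i.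
Proof.
move=> H.
suff: 0 <= \big[Rmult/R1]_(i <- r | P i) F i <= \big[Rmult/R1]_(i <- r | P i) G i by case.
apply: (big_ind2 (fun x y => 0 <= x <= y)) => //; first lra.
move=> x1 x2 y1 y2 [h1 h2] [h3 h4]; split; nra.
Qed.

Lemma Rsum_const (I : finType) (c : R) : \big[Rplus/R0]_(i : I) c = INR #|I| * c.
Proof.
rewrite big_const; elim: #|I| => [|k IH]; first (simpl; lra).
rewrite S_INR iterS IH; lra.
Qed.

Lemma Rprod_const (I : finType) (c : R) : \big[Rmult/R1]_(i : I) c = c ^ #|I|.
Proof. rewrite big_const; elim: #|I| => [|k IH] //; by rewrite iterS IH. Qed.

Lemma Rprod_eq0 (I : finType) (F : I -> R) :
  \big[Rmult/R1]_(i : I) F i <> 0 -> forall i, F i <> 0.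
Proof.
move=> H i Hi; apply: H; rewrite (bigD1 i) //= Hi; lra.
Qed.

Definition inS (k1 k2 : nat) (p : 'I_k2.+1) : bool := (p : nat) \in Sprimes k1 k2.

Lemma mem_Sprimes k1 k2 q : (q \in Sprimes k1 k2) = [&& prime q, k1 < q & q <= k2]%N.
Proof.
rewrite mem_filter mem_iota; case: (prime q) => //=.
case: (ltnP k1 q) => //= h; apply/idP/idP; lia.
Qed.

Definition gt (k1 k2 : nat) (p : 'I_k2.+1) (b : bool) : R :=
  if inS k1 k2 p then (if b then / INR p else 1 - / INR p) else (if b then 0 else 1).

Lemma tlawE k1 k2 A : tlaw k1 k2 A = \big[Rmult/R1]_(p : 'I_k2.+1) gt k1 k2 p (p \in A).
Proof.
rewrite /tlaw; case: ifP => [/forallP H | /negbT].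
  rewrite [RHS](bigID (inS k1 k2)) /= [X in _ = _ * X]big1 ?Rmult_1_r.
    by apply: eq_bigr => p hp; rewrite /gt /inS hp.
  move=> p /negbTE hp; rewrite /gt hp; have := H p; rewrite /inS in hp.
  by rewrite hp implybF => /negbTE ->.
rewrite negb_forall => /existsP [p]; rewrite negb_imply => /andP [pA pS].
rewrite (bigD1 p) //= /gt /inS (negbTE pS) pA; lra.
Qed.

Lemma sum_tlaw k1 k2 : \big[Rplus/R0]_(A : {set 'I_k2.+1}) tlaw k1 k2 A = 1.
Proof.
under eq_bigr do rewrite tlawE.
pose h := fun f : {ffun 'I_k2.+1 -> bool} => [set p | f p].
rewrite (reindex h) /=; last first.
  exists (fun A : {set 'I_k2.+1} => [ffun p => p \in A]) => f _.
    by apply/ffunP => p; rewrite ffunE inE.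
  by apply/setP => p; rewrite inE ffunE.
under eq_bigr do under eq_bigr do rewrite inE.
rewrite -(bigA_distr_bigA (fun p b => gt k1 k2 p b)) /=.
apply: big1 => p _; rewrite big_bool /gt; case: ifP => _ /=; lra.
Qed.
Section NatPart.
Local Open Scope nat_scope.

Lemma crt2 a b (f g : nat -> bool) : 0 < a -> 0 < b -> coprime a b ->
  \sum_(x < a * b) ((f (x %% a) && g (x %% b)) : nat)
  = (\sum_(x < a) (f x : nat)) * (\sum_(y < b) (g y : nat)).
Proof.
move=> a0 b0 co.
pose h := fun x : 'I_(a*b) => (Ordinal (ltn_pmod x a0), Ordinal (ltn_pmod x b0)).
have hinj : injective h.
  move=> x y /(congr1 (fun u => (val u.1, val u.2))) /= [hx hy].
  apply/val_inj => /=.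
  have : (x == y %[mod a * b]) by rewrite chinese_remainder // hx hy !eqxx.
  by rewrite !modn_small // => /eqP.
have hbij : bijective h by apply: inj_card_bij => //; rewrite card_prod !card_ord.
rewrite big_distrlr /= pair_big /= (reindex h) /=; last by apply: onW_bij.
by apply: eq_bigr => x _; case: (f _); case: (g _).
Qed.

Lemma crt_list (T : eqType) (r : seq T) (d : T -> nat) (phi : T -> nat -> bool) :
  uniq r -> (forall t, t \in r -> 0 < d t) ->
  (forall s t, s \in r -> t \in r -> s != t -> coprime (d s) (d t)) ->
  \sum_(x < \prod_(t <- r) d t) (all (fun t => phi t (x %% d t)) r : nat)
   = \prod_(t <- r) \sum_(y < d t) (phi t y : nat).
Proof.
elim: r => [|t r IH] /=.
  by move=> *; rewrite !big_nil big_ord1.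
move=> /andP [tr ur] dpos cop.
rewrite !big_cons.
set D := \prod_(s <- r) d s.
have dvd s : s \in r -> d s %| D.
  by move=> sr; rewrite /D (bigD1_seq s) //= dvdn_mulr.
have coD : coprime (d t) D.
  rewrite /D; elim: r tr {IH ur dvd D} cop dpos => [|s r IHr]; first by rewrite big_nil coprimen1.
  rewrite inE negb_or => /andP [ts tr] cop dpos.
  have sub u : u \in t :: r -> u \in t :: s :: r.
    by rewrite !inE => /orP [->|->]; rewrite ?orbT.
  rewrite big_cons coprimeMr; apply/andP; split.
    by apply: cop; rewrite ?inE ?eqxx ?orbT.
  apply: IHr => // [s1 t1 h1 h2|s1 h1]; first by apply: cop => //; apply: sub.
  by apply: dpos; apply: sub.
have D0 : 0 < D.
  rewrite /D big_seq; apply: (big_ind (fun x => 0 < x)) => // [x y|s sr]; first by rewrite muln_gt0 => ->.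
  by apply: dpos; rewrite inE sr orbT.
transitivity (\sum_(x < d t * D) ((phi t (x %% d t) && (all (fun s => phi s ((x %% D) %% d s)) r)) : nat)).
  apply: eq_bigr => x _; congr (nat_of_bool (_ && _)); apply: eq_in_all => s sr.
  by rewrite (modn_dvdm x (dvd s sr)).
rewrite (@crt2 _ _ (fun y => phi t y) (fun y => all (fun s => phi s (y %% d s)) r)) //; last first.
  by apply: dpos; rewrite inE eqxx.
congr (_ * _); apply: IH => // [s sr|s1 t1 h1 h2]; first by apply: dpos; rewrite inE sr orbT.
by apply: cop; rewrite inE ?h1 ?h2 orbT.
Qed.

Lemma sum_periodic m P (G : nat -> nat) :
  \sum_(x < m * P) G (x %% P) = m * \sum_(x < P) G x.
Proof.
elim: m => [|m IH]; first by rewrite big_ord0.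
rewrite mulSn big_split_ord /= mulSn -IH; congr (_ + _).
  by apply: eq_bigr => i _; rewrite modn_small.
by apply: eq_bigr => i _; rewrite modnDl.
Qed.

Lemma sum_dvdS p (b : bool) : 0 < p ->
  \sum_(y < p) (((p %| y.+1) == b) : nat) = if b then 1 else p.-1.
Proof.
case: p => // p _; rewrite big_ord_recr /= dvdnn.
have H (y : 'I_p) : (p.+1 %| y.+1) = false.
  apply/negbTE/negP => /(dvdn_leq (ltn0Sn _)); have := ltn_ord y; lia.
case: b => /=.
  by rewrite big1 // => y _; rewrite H.
by rewrite addn0 (eq_bigr (fun _ => 1)) ?sum_nat_const ?card_ord ?muln1 // => y _; rewrite H.
Qed.

End NatPart.
Section NatPart2.
Local Open Scope nat_scope.

Lemma Sprimes_uniq k1 k2 : uniq (Sprimes k1 k2).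
Proof. by rewrite filter_uniq // iota_uniq. Qed.

Lemma inS_prime k1 k2 (p : 'I_k2.+1) : inS k1 k2 p -> prime p.
Proof. by rewrite /inS mem_Sprimes => /and3P []. Qed.

Lemma prod_ordS k1 k2 (F : nat -> nat) :
  \prod_(p : 'I_k2.+1 | inS k1 k2 p) F p = \prod_(q <- Sprimes k1 k2) F q.
Proof.
rewrite /inS -(big_mkord (fun q => q \in Sprimes k1 k2)).
rewrite -big_filter.
apply: perm_big; apply: uniq_perm.
- by rewrite filter_uniq // iota_uniq.
- exact: Sprimes_uniq.
move=> q; rewrite mem_filter mem_iota.
case qS: (q \in Sprimes k1 k2); last by [].
move: qS; rewrite mem_Sprimes => /and3P [_ _ h].
rewrite andTb; apply/andP; split => //; lia.
Qed.

Definition patn k1 k2 (x : nat) : {set 'I_k2.+1} := [set p | inS k1 k2 p && ((p:nat) %| x.+1)].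

Lemma dvdS_mod t x : (t %| (x %% t).+1) = (t %| x.+1).
Proof. by rewrite /dvdn -[(x %% t).+1]addn1 -[x.+1]addn1 modnDml. Qed.

Lemma count_pat k1 k2 m (A : {set 'I_k2.+1}) :
  [forall p, (p \in A) ==> inS k1 k2 p] ->
  \sum_(x < m * primeprod k1 k2) nat_of_bool (patn k1 k2 x == A)
  = m * \prod_(p : 'I_k2.+1 | inS k1 k2 p) (if p \in A then 1 else (p:nat).-1).
Proof.
move=> /forallP HA.
pose r := enum [pred p : 'I_k2.+1 | inS k1 k2 p].
have Pr : primeprod k1 k2 = \prod_(t <- r) (t:nat).
  by rewrite /primeprod -(prod_ordS k1 k2 id) /r big_enum.
pose phi (p : 'I_k2.+1) (y : nat) := ((p:nat) %| y.+1) == (p \in A).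
have dvdP t : t \in r -> (t:nat) %| primeprod k1 k2.
  by move=> tr; rewrite Pr (bigD1_seq t) ?enum_uniq //= dvdn_mulr.
transitivity (\sum_(x < m * primeprod k1 k2)
   (all (fun t => phi t ((x %% primeprod k1 k2) %% t)) r : nat)).
  apply: eq_bigr => x _; congr nat_of_bool.
  rewrite (eq_in_all (a2 := fun t => phi t (x %% t))); last first.
    by move=> t tr /=; rewrite (modn_dvdm x (dvdP t tr)).
  apply/eqP/allP.
    move=> hx t; rewrite mem_enum inE => tS; by rewrite /phi -hx inE tS /= dvdS_mod.
  move=> H; apply/setP => p; rewrite inE; case pS: (inS k1 k2 p) => /=.
    by have := H p; rewrite mem_enum inE pS /phi dvdS_mod => /(_ isT) /eqP.
  by have := HA p; rewrite pS implybF => /negbTE ->.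
rewrite (sum_periodic m (primeprod k1 k2) (fun y => all (fun t => phi t (y %% t)) r)).
rewrite Pr crt_list.
- congr (_ * _); rewrite /r big_enum /=; apply: eq_bigr => p pS.
  rewrite sum_dvdS //; apply: prime_gt0; apply: (@inS_prime k1 k2); move: pS; by rewrite inE.
- exact: enum_uniq.
- by move=> t; rewrite mem_enum inE => /(@inS_prime k1 k2) /prime_gt0.
- move=> s t; rewrite !mem_enum !inE => /(@inS_prime k1 k2) ps /(@inS_prime k1 k2) pt st.
  by rewrite prime_coprime // dvdn_prime2.
Qed.

End NatPart2.

Lemma count_patR k1 k2 m (A : {set 'I_k2.+1}) :
  INR (\sum_(x < m * primeprod k1 k2) nat_of_bool (patn k1 k2 x == A))%N
  = INR (m * primeprod k1 k2) * tlaw k1 k2 A.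
Proof.
rewrite /tlaw; case: ifP => HA; last first.
  rewrite Rmult_0_r big1 //= => x _.
  move/negbT: HA; rewrite negb_forall => /existsP [p]; rewrite negb_imply => /andP [pA pS].
  case: eqP => // hx; move: pA; rewrite -hx inE => /andP [h _].
  by rewrite /inS in h; rewrite h in pS.
rewrite count_pat // mult_INR mult_INR Rmult_assoc; congr (_ * _).
rewrite /primeprod -(prod_ordS k1 k2 id) INR_prod INR_prod.
rewrite -big_split /=; apply: eq_bigr => p pS.
have p2 := prime_gt1 (@inS_prime k1 k2 p pS).
have p0 : INR p <> 0 by apply: not_0_INR; lia.
case: (p \in A) => /=; first by field.
rewrite -subn1 minus_INR /=; last by lia.
by field.
Qed.

Definition kap k1 k2 n N (x : 'I_n) (A : {set 'I_k2.+1}) : R :=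
  / INR n * (INR (nat_of_bool (x < N)%N) * INR (nat_of_bool (patn k1 k2 x == A))
             + INR (nat_of_bool (~~ (x < N)%N)) * tlaw k1 k2 A).

Definition mu0 k1 k2 n N (w : Omega n k2) : R :=
  \big[Rmult/R1]_(i : 'I_n) kap k1 k2 n N (w.1 i) (w.2 i).

Lemma INRb_ge0 (b : bool) : 0 <= INR (nat_of_bool b).
Proof. case: b => /=; lra. Qed.

Lemma tlaw_ge0 k1 k2 A : 0 <= tlaw k1 k2 A.
Proof.
rewrite tlawE; apply: Rprod_ge0 => p _; rewrite /gt.
case pS: (inS k1 k2 p); last by case: (p \in A) => /=; lra.
have p2 := prime_gt1 (@inS_prime k1 k2 p pS).
have hp : 1 < INR p by apply: lt_1_INR; lia.
have : 0 < / INR p < 1 by split; [apply: Rinv_0_lt_compat; lra| rewrite -[X in _ < X]Rinv_1; apply: Rinv_1_lt_contravar; lra].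
case: (p \in A) => /=; lra.
Qed.

Lemma kap_ge0 k1 k2 n N x A : 0 <= kap k1 k2 n N x A.
Proof.
rewrite /kap; apply: Rmult_le_pos.
  by apply: Rlt_le; apply: Rinv_0_lt_compat; apply: lt_0_INR; have := ltn_ord x; lia.
have := INRb_ge0 (x < N)%N; have := INRb_ge0 (patn k1 k2 x == A);
have := INRb_ge0 (~~ (x < N)%N); have := tlaw_ge0 k1 k2 A; nra.
Qed.

Lemma sum_kap_A k1 k2 n N (x : 'I_n) :
  \big[Rplus/R0]_(A : {set 'I_k2.+1}) kap k1 k2 n N x A = / INR n.
Proof.
rewrite /kap -big_distrr /= big_split /= -!big_distrr /= sum_tlaw.
rewrite (bigD1 (patn k1 k2 x)) //= eqxx big1 => [|A hA]; last by rewrite eq_sym (negbTE hA).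
case: (x < N)%N => /=; lra.
Qed.

Section NatPart3.
Local Open Scope nat_scope.
Lemma sum_b_nb n (P : pred 'I_n) :
  \sum_(x < n) nat_of_bool (P x) + \sum_(x < n) nat_of_bool (~~ P x) = n.
Proof.
rewrite -big_split /= (eq_bigr (fun _ => 1)) ?sum_nat_const ?card_ord ?muln1 //.
by move=> x _; case: (P x).
Qed.

Lemma sum_lt n N : N <= n -> \sum_(x < n) nat_of_bool (x < N) = N.
Proof.
move=> hN; rewrite (eq_bigr (fun x : 'I_n => if (x:nat) < N then 1 else 0)); last first.
  by move=> x _; case: (_ < _).
rewrite -big_mkcond /= -(big_ord_widen n (fun _ => 1) hN).
by rewrite sum_nat_const card_ord muln1.
Qed.
End NatPart3.

Lemma sum_kap_x k1 k2 n m (A : {set 'I_k2.+1}) : (m * primeprod k1 k2 <= n)%N -> (0 < n)%N ->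
  \big[Rplus/R0]_(x : 'I_n) kap k1 k2 n (m * primeprod k1 k2) x A = tlaw k1 k2 A.
Proof.
move=> hN n0.
rewrite /kap -big_distrr /= big_split /= -big_distrl /=.
have E1 : \big[Rplus/R0]_(x < n) (INR (nat_of_bool (x < m * primeprod k1 k2)%N) *
                INR (nat_of_bool (patn k1 k2 x == A)))
   = INR (\sum_(x < m * primeprod k1 k2) nat_of_bool (patn k1 k2 x == A))%N.
  rewrite (big_ord_widen n (fun x => nat_of_bool (patn k1 k2 x == A)) hN).
  rewrite INR_sum [RHS]big_mkcond /=; apply: eq_bigr => x _.
  case: (_ < _)%N => /=; lra.
have E2' : (\sum_(x < n) nat_of_bool (~~ (x < m * primeprod k1 k2)%N) = n - m * primeprod k1 k2)%N.
  have := @sum_b_nb n (fun x : 'I_n => (x < m * primeprod k1 k2)%N).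
  rewrite sum_lt //; lia.
have E2 : \big[Rplus/R0]_(x < n) INR (nat_of_bool (~~ (x < m * primeprod k1 k2)%N))
   = INR (n - m * primeprod k1 k2).
  by rewrite -E2' INR_sum.
rewrite E1 E2 count_patR minus_INR //.
have : INR n <> 0 by apply: not_0_INR; lia.
move=> h; field; exact: h.
by apply/leP.
Qed.

Lemma marg_x k1 k2 n N (x : {ffun 'I_n -> 'I_n}) :
  \big[Rplus/R0]_(y : {ffun 'I_n -> {set 'I_k2.+1}}) mu0 k1 k2 n N (x, y) = (/ INR n) ^ n.
Proof.
rewrite /mu0 /= -(bigA_distr_bigA (fun i A => kap k1 k2 n N (x i) A)) /=.
under eq_bigr do rewrite sum_kap_A.
by rewrite Rprod_const card_ord.
Qed.

Lemma marg_y k1 k2 n m (y : {ffun 'I_n -> {set 'I_k2.+1}}) :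
  (m * primeprod k1 k2 <= n)%N -> (0 < n)%N ->
  \big[Rplus/R0]_(x : {ffun 'I_n -> 'I_n}) mu0 k1 k2 n (m * primeprod k1 k2) (x, y)
  = \big[Rmult/R1]_(i : 'I_n) tlaw k1 k2 (y i).
Proof.
move=> hN n0.
rewrite /mu0 /= -(bigA_distr_bigA (fun i x => kap k1 k2 n (m * primeprod k1 k2) x (y i))) /=.
by apply: eq_bigr => i _; rewrite sum_kap_x.
Qed.

Lemma INR_expn a k : INR (a ^ k)%N = INR a ^ k.
Proof. elim: k => [|k IH]; first by rewrite expn0. by rewrite expnS mult_INR IH. Qed.

Lemma mu0_total k1 k2 n N : (0 < n)%N ->
  \big[Rplus/R0]_(w : Omega n k2) mu0 k1 k2 n N w = 1.
Proof.
move=> n0.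
rewrite /Omega -(pair_big (fun _ => true) (fun _ => true) (fun x y => mu0 k1 k2 n N (x, y))) /=.
under eq_bigr do rewrite marg_x.
rewrite Rsum_const card_ffun !card_ord INR_expn -Rpow_mult_distr Rinv_r ?pow1 //.
apply: not_0_INR; lia.
Qed.

Definition Bc n N (x : {ffun 'I_n -> 'I_n}) : nat := #|[set i | ~~ (x i < N)%N]|.

Section NatPart4.
Local Open Scope nat_scope.

Lemma Y_le k1 k2 n N (x : {ffun 'I_n -> 'I_n}) (y : {ffun 'I_n -> {set 'I_k2.+1}}) q :
  q \in Sprimes k1 k2 -> (forall i, x i < N -> y i = patn k1 k2 (x i)) ->
  Ycount n (Xval n x) q <= Ycount n (fun i => Xtval k2 (y i)) q + Bc n N x.
Proof.
rewrite /Ycount /Bc => qS hy.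
apply: (leq_trans (subset_leq_card (_ : _ \subset
   [set i | q %| Xtval k2 (y i)] :|: [set i | ~~ (x i < N)]))); last by rewrite cardsU leq_subr.
apply/subsetP => i; rewrite !inE /Xval => hq.
case hx: (x i < N) => /=; last by rewrite orbT.
rewrite hy // /Xtval orbF.
have qk : q < k2.+1 by move: qS; rewrite mem_Sprimes => /and3P [_ _ h]; lia.
pose qo := Ordinal qk.
have qin : qo \in patn k1 k2 (x i) by rewrite inE /inS /= qS hq.
by rewrite (bigD1 qo) //= dvdn_mulr.
Qed.

Lemma Y_le_n n (v : 'I_n -> nat) q : Ycount n v q <= n.
Proof. by rewrite /Ycount; apply: leq_trans (max_card _) _; rewrite card_ord. Qed.

Lemma sumsq_bound k1 k2 n N (x : {ffun 'I_n -> 'I_n}) (y : {ffun 'I_n -> {set 'I_k2.+1}}) :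
  (forall i, x i < N -> y i = patn k1 k2 (x i)) ->
  sumsqY k1 k2 n (Xval n x) <= sumsqY k1 k2 n (fun i => Xtval k2 (y i)) + k2 * (2 * n * Bc n N x).
Proof.
move=> hy; rewrite /sumsqY.
have hs : size (Sprimes k1 k2) <= k2.
  by rewrite size_filter (leq_trans (count_size _ _)) // size_iota leq_subr.
suff H : forall s, {subset s <= Sprimes k1 k2} ->
  \sum_(q <- s) Ycount n (Xval n x) q ^ 2 <=
  \sum_(q <- s) Ycount n (fun i => Xtval k2 (y i)) q ^ 2 + size s * (2 * n * Bc n N x).
  apply: leq_trans (H _ (fun q h => h)) _; rewrite leq_add2l leq_mul2r hs orbT //.
elim => [|q s IH] hsub; first by rewrite !big_nil.
rewrite !big_cons /=.
have h1 := @Y_le k1 k2 n N x y q (hsub q (mem_head _ _)) hy.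
have h2 := @Y_le_n n (Xval n x) q.
have h3 := @Y_le_n n (fun i => Xtval k2 (y i)) q.
have h4 : {subset s <= Sprimes k1 k2} by move=> r hr; apply: hsub; rewrite inE hr orbT.
have {}h4 := IH h4.
have h5 : Ycount n (Xval n x) q ^ 2 <= Ycount n (fun i => Xtval k2 (y i)) q ^ 2 + 2 * n * Bc n N x.
  nia.
apply: (leq_trans (leq_add h5 h4)).
set u := (\sum_(j <- s) _); rewrite [(size s).+1 * _]mulSn.
set v := 2 * n * Bc n N x; set w := size s * v.
set b2 := Ycount n _ q ^ 2.
lia.
Qed.
End NatPart4.

Lemma event_imp k1 k2 n N (x : {ffun 'I_n -> 'I_n}) (y : {ffun 'I_n -> {set 'I_k2.+1}}) eps :
  (0 < n)%N -> (0 < k2)%N ->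
  (forall i, (x i < N)%N -> y i = patn k1 k2 (x i)) ->
  INR n ^ 2 * eps <= INR (sumsqY k1 k2 n (Xval n x)) - INR (sumsqY k1 k2 n (fun i => Xtval k2 (y i))) ->
  INR n * eps / (2 * INR k2) <= INR (Bc n N x).
Proof.
move=> n0 k0 hy hev.
have h := @sumsq_bound k1 k2 n N x y hy; move/leP/le_INR: h.
rewrite plus_INR !mult_INR => h.
have hn : 0 < INR n by apply: lt_0_INR; lia.
have hk : 0 < INR k2 by apply: lt_0_INR; lia.
have h2 : INR 2 = 2 by [].
rewrite h2 in h.
have h3 : INR n * (INR n * eps) <= INR n * (2 * INR k2 * INR (Bc n N x)) by nra.
have h4 := Rmult_le_reg_l _ _ _ hn h3.
rewrite /Rdiv; apply: (Rmult_le_reg_r (2 * INR k2)); first lra.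
rewrite Rmult_assoc Rinv_l; lra.
Qed.

Lemma Rpow_mono b (k : nat) t : 0 < b <= 1 -> t <= INR k -> b ^ k <= Rpower b t.
Proof.
move=> [b0 b1] hk; rewrite -Rpower_pow // /Rpower.
have hl : ln b <= 0.
  case: (Req_dec b 1) => [->|hb]; first by rewrite ln_1; lra.
  rewrite -ln_1; apply: Rlt_le; apply: ln_increasing => //; lra.
have : INR k * ln b <= t * ln b by nra.
case/Rle_lt_or_eq_dec => h; last by rewrite h; lra.
by apply: Rlt_le; apply: exp_increasing.
Qed.

Lemma Rprod_const_in (I : finType) (A : {pred I}) (c : R) :
  \big[Rmult/R1]_(i in A) c = c ^ #|A|.
Proof. rewrite big_const; elim: #|A| => [|k IH] //; by rewrite iterS IH. Qed.

Lemma card_setn n : #|{set 'I_n}| = (2 ^ n)%N.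
Proof.
rewrite -cardsT (_ : [set: {set 'I_n}] = powerset [set: 'I_n]).
  by rewrite card_powerset cardsT card_ord.
by apply/setP => B; rewrite !inE subsetT.
Qed.

Lemma sum_notlt n N : (N <= n)%N ->
  \big[Rplus/R0]_(v < n) INR (nat_of_bool (~~ (v < N)%N)) = INR (n - N).
Proof.
move=> hN.
have E : (\sum_(x < n) nat_of_bool (~~ (x < N)%N) = n - N)%N.
  have := @sum_b_nb n (fun x : 'I_n => (x < N)%N).
  rewrite sum_lt //; lia.
by rewrite -E INR_sum.
Qed.

Lemma tail_bound n N m t : (0 < n)%N -> (0 < m)%N -> (N <= n)%N -> ((n - N) * m <= n)%N ->
  \big[Rplus/R0]_(x : {ffun 'I_n -> 'I_n})
     ((if Rle_dec t (INR (Bc n N x)) then 1 else 0) * (/ INR n) ^ n)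
  <= 2 ^ n * Rpower (/ INR m) t.
Proof.
move=> n0 m0 hN hm.
pose ind (T : {set 'I_n}) := if Rle_dec t (INR #|T|) then 1 else 0.
pose g (T : {set 'I_n}) (i : 'I_n) (v : 'I_n) :=
  / INR n * (if i \in T then INR (nat_of_bool (~~ (v < N)%N)) else 1).
have hn : 0 < INR n by apply: lt_0_INR; lia.
have hm' : 0 < INR m by apply: lt_0_INR; lia.
have ind0 T : 0 <= ind T by rewrite /ind; case: Rle_dec => ? /=; lra.
have g0 T i v : 0 <= g T i v.
  rewrite /g; apply: Rmult_le_pos; first by apply: Rlt_le; apply: Rinv_0_lt_compat.
  by case: (i \in T); [apply: INRb_ge0 | lra].
have step1 (x : {ffun 'I_n -> 'I_n}) :
  (if Rle_dec t (INR (Bc n N x)) then 1 else 0) * (/ INR n) ^ n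
  <= \big[Rplus/R0]_(T : {set 'I_n}) (ind T * \big[Rmult/R1]_(i : 'I_n) g T i (x i)).
  rewrite (bigD1 [set i | ~~ (x i < N)%N]) //=.
  have -> : \big[Rmult/R1]_(i : 'I_n) g [set i | ~~ (x i < N)%N] i (x i) = (/ INR n) ^ n.
    transitivity (\big[Rmult/R1]_(i : 'I_n) / INR n); last by rewrite Rprod_const card_ord.
    by apply: eq_bigr => i _; rewrite /g inE; case: (x i < N)%N => /=; lra.
  have : 0 <= \big[Rplus/R0]_(T : {set 'I_n} | T != [set i | ~~ (x i < N)%N])
                 (ind T * \big[Rmult/R1]_(i : 'I_n) g T i (x i)).
    apply: Rsum_ge0 => T _; apply: Rmult_le_pos => //; exact: Rprod_ge0.
  rewrite /ind /Bc => h; rewrite -[X in X <= _]Rplus_0_r; apply: Rplus_le_compat_l; exact: h.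
apply: (Rle_trans _ _ _ (Rsum_le _ _ _ _ _ (fun x _ => step1 x))).
rewrite exchange_big /=.
have step2 (T : {set 'I_n}) :
  \big[Rplus/R0]_(x : {ffun 'I_n -> 'I_n}) (ind T * \big[Rmult/R1]_(i : 'I_n) g T i (x i))
  <= Rpower (/ INR m) t.
  rewrite -big_distrr /= -(bigA_distr_bigA (fun i v => g T i v)) /=.
  have hprod : \big[Rmult/R1]_(i : 'I_n) \big[Rplus/R0]_(v : 'I_n) g T i v <= (/ INR m) ^ #|T|.
    rewrite -Rprod_const_in [X in _ <= X]big_mkcond /=; apply: Rprod_le => i _.
    split; first by apply: Rsum_ge0 => v _.
    rewrite /g; case iT: (i \in T).
      rewrite -big_distrr /= sum_notlt //.
      have ha : INR (n - N) * INR m <= INR n.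
        by rewrite -mult_INR; apply: le_INR; apply/leP.
      have hu : / INR n * INR n = 1 by apply: Rinv_l; lra.
      have hw : / INR m * INR m = 1 by apply: Rinv_l; lra.
      have hu0 : 0 < / INR n by apply: Rinv_0_lt_compat.
      have hw0 : 0 < / INR m by apply: Rinv_0_lt_compat.
      have := Rmult_le_compat_l (/ INR n * / INR m) _ _ (ltac:(nra)) ha.
      have := pos_INR (n - N); nra.
    rewrite -big_distrr /= Rsum_const card_ord Rmult_1_r Rinv_l; lra.
  have hm1 : 0 < / INR m <= 1.
    split; first by apply: Rinv_0_lt_compat.
    rewrite -Rinv_1; apply: Rinv_le_contravar; first lra.
    have : (1 <= m)%N by lia.
    by move/leP/le_INR.
  rewrite /ind; case: Rle_dec => ht.
    rewrite Rmult_1_l; apply: Rle_trans hprod _; exact: Rpow_mono.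
  rewrite Rmult_0_l /Rpower; apply: Rlt_le; exact: exp_pos.
apply: Rle_trans (Rsum_le _ _ _ _ _ (fun T _ => step2 T)) _.
rewrite Rsum_const card_setn INR_expn.
have -> : INR 2 = 2 by simpl; lra.
lra.
Qed.

Lemma primeprod_gt0 k1 k2 : (0 < primeprod k1 k2)%N.
Proof.
rewrite /primeprod big_seq; apply: (big_ind (fun x => 0 < x)%N) => // [x y hx hy|p].
  by rewrite muln_gt0 hx hy.
by rewrite mem_Sprimes => /and3P [/prime_gt0].
Qed.

Lemma pointwise k1 k2 n N eps (w : Omega n k2) : (0 < n)%N -> (0 < k2)%N ->
  (if Rle_dec (INR n ^ 2 * eps)
          (INR (sumsqY k1 k2 n (Xval n w.1)) - INR (sumsqY k1 k2 n (fun i => Xtval k2 (w.2 i))))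
     then mu0 k1 k2 n N w else 0)
  <= (if Rle_dec (INR n * eps / (2 * INR k2)) (INR (Bc n N w.1)) then 1 else 0) * mu0 k1 k2 n N w.
Proof.
move=> n0 k0.
have mu_ge0 : 0 <= mu0 k1 k2 n N w by apply: Rprod_ge0 => i _; apply: kap_ge0.
case: (Req_dec (mu0 k1 k2 n N w) 0) => hz.
  rewrite hz; case: Rle_dec => ? /=; case: Rle_dec => ? /=; lra.
have hy : forall i, (w.1 i < N)%N -> w.2 i = patn k1 k2 (w.1 i).
  move=> i hi; have := @Rprod_eq0 _ _ hz i; rewrite /kap hi /=.
  case: eqP => [-> //|_] /= h; exfalso; apply: h; ring.
case: Rle_dec => hev /=; last by case: Rle_dec => ? /=; lra.
have := @event_imp k1 k2 n N w.1 w.2 eps n0 k0 hy hev.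
case: Rle_dec => ? /= h; [lra | contradiction].
Qed.

Theorem lemma3p7 (k1 k2 n m : nat) (hk : (k1 < k2)%N) (hm : (0 < m)%N)
  (hlo : (m * primeprod k1 k2 <= n)%N) (hhi : (n < m.+1 * primeprod k1 k2)%N) :
  exists mu : Omega n k2 -> R,
    is_coupling k1 k2 n mu /\
    forall eps : R, 0 < eps ->
      event_prob k1 k2 n mu eps
        <= 2 ^ n * Rpower (/ INR m) (INR n * eps / (2 * INR k2)).
Proof.
have P0 := primeprod_gt0 k1 k2.
have n0 : (0 < n)%N by nia.
have k0 : (0 < k2)%N by lia.
exists (mu0 k1 k2 n (m * primeprod k1 k2)); split.
  split; first by move=> w; apply: Rprod_ge0 => i _; apply: kap_ge0.
  split; first exact: mu0_total.
  split; first by move=> x; apply: marg_x.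
  by move=> y; apply: marg_y.
move=> eps heps.
rewrite /event_prob.
apply: Rle_trans.
  apply: Rsum_le => w _; exact: (@pointwise k1 k2 n (m * primeprod k1 k2) eps w n0 k0).
rewrite /Omega -(pair_big (fun _ => true) (fun _ => true)
  (fun x y => (if Rle_dec (INR n * eps / (2 * INR k2)) (INR (Bc n (m * primeprod k1 k2) x))
               then 1 else 0) * mu0 k1 k2 n (m * primeprod k1 k2) (x, y))) /=.
under eq_bigr do rewrite -big_distrr /= marg_x.
apply: tail_bound => //; nia.
Qed.
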